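(* Under the standing assumptions below, for each $i$ the category $D(\varepsilon_{a_i})$ is full in $R$: every arrow of $Q$ (and more generally every morphism of $R$) between two vertices of $D(\varepsilon_{a_i})$ belongs to $D(\varepsilon_{a_i})$.
   Context: Standing assumptions: $R=kQ/I$ is a string algebra (I generated by paths; each vertex has at most two incoming and two outgoing arrows; for each arrow $\alpha:x\to y$ at most one arrow $\beta$ from $y$ with $\alpha\beta\notin I$ and at most one arrow $\gamma$ into $x$ with $\gamma\alpha\notin I$; paths composed left to right) with no DOZE, $Q$ contains a band, and every band has either only exiting arrows or only entering arrows, and $Q$ is not just a single band without entering or exiting arrows. A walk is a sequence of arrows and inverse arrows, reduced if no subwalk $\alpha\alpha^{-1}$ or $\alpha^{-1}\alpha$; a string is a reduced walk with no zero-relation; a band is a cyclic string, not a power of another, all of whose powers are strings. Arrows entering/exiting a band are arrows not on the band with target/source on the band. A double-zero is a reduced walk $\rho_1\nu\rho_2$ with $\rho_1,\rho_2$ paths in $I$ traversed along their arrows; a DOZE is a double-zero $\rho_1\omega_1\omega_2\omega_3\rho_2$ with $\omega_2$ a band. Let $\Theta_1,\dots,\Theta_n$ be the bands (up to cyclic permutation) having only exiting arrows; on each $\Theta_i$ choose a vertex $a_i$ such that all arrows starting at $a_i$ belong to $\Theta_i$. For a string $\omega$, $W(\omega)$ is the set of strings of the form $\omega_1\omega\omega_2$, and $D(\omega)$ is the subcategory whose objects are the vertices through which some string of $W(\omega)$ passes and whose morphisms are generated by the arrows through which some string of $W(\omega)$ passes. $\varepsilon_{a}$ denotes the trivial path at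 $a$. *)

(* Defs.v *)
From mathcomp Require Import all_boot.
Set Implicit Arguments. Unset Strict Implicit. Unset Printing Implicit Defensive.

Section StringAlgebra.
(* Quiver Q = (V, Ar, s, t); I is the ideal generated by the paths in [rels].
   A path is a sequence of arrows composed LEFT TO RIGHT: [:: a1; ...; an]
   with t a_i = s a_(i+1). *)
Variables (V Ar : finType) (s t : Ar -> V) (rels : seq (seq Ar)).

Definition is_path (p : seq Ar) : bool := sorted (fun a b => t a == s b) p.

Definition in_I (p : seq Ar) : bool := has (fun r => infix r p) rels.

Definition string_algebra : Prop :=
  (forall r, r \in rels -> is_path r /\ 2 <= size r) /\
  (forall x : V, #|[pred a | t a == x]| <= 2 /\ #|[pred a | s a == x]| <= 2) /\
  (forall al : Ar,
      #|[pred b | (s b == t al) && ~~ in_I [:: al; b]]| <= 1 /\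
      #|[pred g | (t g == s al) && ~~ in_I [:: g; al]]| <= 1).

(* letters: (a, true) = the arrow a, (a, false) = the inverse arrow a^-1 *)
Definition letter := (Ar * bool)%type.
Definition lsrc (l : letter) : V := if l.2 then s l.1 else t l.1.
Definition ltgt (l : letter) : V := if l.2 then t l.1 else s l.1.
Definition dir (a : Ar) : letter := (a, true).
Definition inv (a : Ar) : letter := (a, false).

(* a walk: a starting vertex and a sequence of letters (empty = trivial walk) *)
Definition walk := (V * seq letter)%type.
Definition wstart (w : walk) : V := w.1.
Definition wlet (w : walk) : seq letter := w.2.
Definition wend (w : walk) : V := last w.1 (map ltgt w.2).
Definition wverts (w : walk) : seq V := w.1 :: map ltgt w.2.
Definition warrows (w : walk) : seq Ar := map fst w.2.

Definition valid_walk (w : walk) : bool :=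
  sorted (fun l1 l2 => ltgt l1 == lsrc l2) w.2 &&
  (if w.2 is l :: _ then lsrc l == w.1 else true).

Definition reduced (w : walk) : bool :=
  sorted (fun l1 l2 => ~~ ((l1.1 == l2.1) && (l1.2 != l2.2))) w.2.

Definition no_zero_relation (w : walk) : Prop :=
  forall p : seq Ar, in_I p ->
    ~~ infix (map dir p) w.2 /\ ~~ infix (map inv (rev p)) w.2.

Definition is_string (w : walk) : Prop :=
  valid_walk w /\ reduced w /\ no_zero_relation w.

(* concatenation (meaningful when wend w1 = wstart w2) and powers *)
Definition wcat (w1 w2 : walk) : walk := (w1.1, w1.2 ++ w2.2).
Definition wpow (w : walk) (n : nat) : walk := (w.1, flatten (nseq n w.2)).

Definition trivial_walk (x : V) : walk := (x, [::]).

Definition is_band (w : walk) : Prop :=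
  is_string w /\ w.2 != [::] /\ wend w = wstart w /\
  (~ exists (u : walk) (k : nat), 1 < k /\ w = wpow u k) /\
  (forall n, 0 < n -> is_string (wpow w n)).

Definition entering (w : walk) (a : Ar) : Prop :=
  a \notin warrows w /\ t a \in wverts w.
Definition exiting (w : walk) (a : Ar) : Prop :=
  a \notin warrows w /\ s a \in wverts w.

(* double-zero  rho1 nu rho2  with nu = om1 om2 om3 and om2 a band *)
Definition is_DOZE (w : walk) : Prop :=
  exists (r1 r2 : seq Ar) (o1 o2 o3 : seq letter),
    w.2 = map dir r1 ++ o1 ++ o2 ++ o3 ++ map dir r2 /\
    valid_walk w /\ reduced w /\ in_I r1 /\ in_I r2 /\
    is_band (wend (w.1, map dir r1 ++ o1), o2).

Definition has_DOZE : Prop := exists w, is_DOZE w.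

Definition standing_assumptions : Prop :=
  string_algebra /\
  ~ has_DOZE /\
  (exists w, is_band w) /\
  (forall w, is_band w ->
     (forall a, ~ entering w a) \/ (forall a, ~ exiting w a)) /\
  ~ (exists w, is_band w /\ (forall a : Ar, a \in warrows w) /\
                           (forall x : V, x \in wverts w)).

Definition inW (om w : walk) : Prop :=
  is_string w /\
  exists w1 w2 : walk, wend w1 = wstart om /\ wend om = wstart w2 /\
                       w = wcat w1 (wcat om w2).

Definition D_obj (om : walk) (x : V) : Prop :=
  exists w, inW om w /\ x \in wverts w.
Definition D_arr (om : walk) (a : Ar) : Prop :=
  exists w, inW om w /\ a \in warrows w.

End StringAlgebra.

(* Main.v *)
From Stdlib Require Import Classical.
Require Import Defs.
From mathcomp Require Import all_boot.
From mathcomp Require Import zify.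
Set Implicit Arguments. Unset Strict Implicit. Unset Printing Implicit Defensive.

Section GenSeq.
Variable T : eqType.

Lemma sorted_catJ (r : rel T) (A B : seq T) :
  sorted r (A ++ B) =
  [&& sorted r A, sorted r B &
      (if A is a :: A' then (if B is b :: _ then r (last a A') b else true) else true)].
Proof.
case: A => [|a A] /=; first by case: (sorted r B).
rewrite cat_path; case: B => [|b B] /=; first by rewrite !andbT.
by rewrite andbC -!andbA; do !bool_congr.
Qed.

Lemma sorted_mid (r : rel T) (A B C : seq T) : sorted r (A ++ B ++ C) -> sorted r B.
Proof. by rewrite !sorted_catJ => /and3P[_ /and3P[]]. Qed.

Lemma prefix_cat_split (X A B : seq T) : prefix X (A ++ B) ->
  prefix X A \/ exists X2 B2, X = A ++ X2 /\ X2 != [::] /\ B = X2 ++ B2.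
Proof.
elim: A X => [|a A IH] X /=.
  case: X => [|x X]; first by left.
  move=> /prefixP[B2 ->]; right; by exists (x :: X), B2.
case: X => [|x X] //=; first by left.
move=> /andP[/eqP-> /IH [h|[X2 [B2 [-> [h1 h2]]]]]]; first by left; rewrite eqxx.
by right; exists X2, B2.
Qed.

Lemma infix_cat_split (X A B : seq T) : infix X (A ++ B) ->
  infix X A \/ infix X B \/
  exists X1 X2 A1 B2, X = X1 ++ X2 /\ X1 != [::] /\ X2 != [::] /\
                      A = A1 ++ X1 /\ B = X2 ++ B2.
Proof.
elim: A => [|a A IH]; first by right; left.
rewrite cat_cons infix_consl -cat_cons => /orP[].
  move/prefix_cat_split => [h|[X2 [B2 [-> [h1 h2]]]]].
    by left; apply: prefixW.
  by right; right; exists (a :: A), X2, [::], B2.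
move/IH => [h|[h|[X1 [X2 [A1 [B2 [h1 [h2 [h3 [h4 h5]]]]]]]]]].
- by left; rewrite infix_consl h orbT.
- by right; left.
- by right; right; exists X1, X2, (a :: A1), B2; rewrite h4.
Qed.

Lemma cat_cmp (A B A' B' : seq T) : A ++ B = A' ++ B' -> size A <= size A' ->
  exists C, A' = A ++ C /\ B = C ++ B'.
Proof.
elim: A A' => [|x A IH] A' /=; first by move=> ->; exists A'.
case: A' => [|x' A'] //= [-> h] hs.
by have [C [-> ->]] := IH A' h hs; exists C.
Qed.

End GenSeq.

Section GenMap.
Variables (T1 T2 : eqType) (f : T1 -> T2).
Hypothesis finj : injective f.

Lemma prefix_map_inj X Y : prefix (map f X) (map f Y) = prefix X Y.
Proof.
elim: X Y => [|x X IH] [|y Y] //=.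
by rewrite (inj_eq finj) IH.
Qed.

Lemma infix_map_inj X Y : infix (map f X) (map f Y) = infix X Y.
Proof.
elim: Y => [|y Y IH]; first by case: X.
by rewrite map_cons !infix_consl -map_cons prefix_map_inj IH.
Qed.
End GenMap.

Section Walks.
Variables (V Ar : finType) (s t : Ar -> V) (rels : seq (seq Ar)).
Local Notation letter := (Ar * bool)%type.
Local Notation LS := (lsrc s t).
Local Notation LT := (ltgt s t).

Definition flipl (l : letter) : letter := (l.1, ~~ l.2).
Definition vrel (l1 l2 : letter) : bool := LT l1 == LS l2.
Definition rrel (l1 l2 : letter) : bool := ~~ ((l1.1 == l2.1) && (l1.2 != l2.2)).

Fixpoint vp (x : V) (L : seq letter) : bool :=
  if L is l :: L' then (LS l == x) && vp (LT l) L' else true.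
Definition wE (x : V) (L : seq letter) : V := last x (map LT L).

Lemma LS_flip l : LS (flipl l) = LT l.
Proof. by case: l => a []. Qed.
Lemma LT_flip l : LT (flipl l) = LS l.
Proof. by case: l => a []. Qed.
Lemma flipK : involutive flipl.
Proof. by case=> a b; rewrite /flipl /= negbK. Qed.
Lemma flip_inj : injective flipl.
Proof. exact: inv_inj flipK. Qed.

Lemma path_vp l L : path vrel l L = vp (LT l) L.
Proof. by elim: L l => [|l' L IH] l //=; rewrite IH /vrel eq_sym. Qed.

Lemma valid_vp x L : valid_walk s t (x, L) = vp x L.
Proof. by case: L => [|l L] //=; rewrite -(path_vp l L) andbC. Qed.

Lemma wend_wE x L : wend s t (x, L) = wE x L.
Proof. by []. Qed.

Lemma vp_cat x A B : vp x (A ++ B) = vp x A && vp (wE x A) B.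
Proof. by elim: A x => [|l A IH] x //=; rewrite IH andbA. Qed.

Lemma wE_cat x A B : wE x (A ++ B) = wE (wE x A) B.
Proof. by rewrite /wE map_cat last_cat. Qed.

Lemma wE_cons x l L : wE x (l :: L) = wE (LT l) L.
Proof. by []. Qed.

Lemma vp_rev x L : vp x L ->
  vp (wE x L) (rev (map flipl L)) /\ wE (wE x L) (rev (map flipl L)) = x.
Proof.
elim: L x => [|l L IH] x //= /andP[/eqP hx hv].
have [h1 h2] := IH _ hv.
rewrite rev_cons -cats1 vp_cat wE_cat h1 h2 /= LS_flip eqxx.
by rewrite /wE /= LT_flip hx.
Qed.

Lemma rrel_flip l1 l2 : rrel (flipl l2) (flipl l1) = rrel l1 l2.
Proof.
case: l1 l2 => a1 b1 [a2 b2]; rewrite /rrel /flipl /=.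
by rewrite eq_sym; case: b1; case: b2.
Qed.

Lemma sorted_rev_flip L : sorted rrel (rev (map flipl L)) = sorted rrel L.
Proof.
rewrite rev_sorted.
case: L => [|l L] //=.
elim: L l => [|l' L IH] l //=.
by rewrite IH rrel_flip.
Qed.

Lemma dir_flip (a : Ar) : flipl (Defs.inv a) = dir a.
Proof. by []. Qed.
Lemma inv_flip (a : Ar) : flipl (dir a) = Defs.inv a.
Proof. by []. Qed.

Lemma nzr_inv (x : V) L : no_zero_relation rels (x, L) ->
   forall y : V, no_zero_relation rels (y, rev (map flipl L)).
Proof.
move=> h y p /h [h1 h2] /=; split.
- rewrite -infix_revLR -map_rev.
  have -> : map (@dir Ar) (rev p) = map flipl (map (@Defs.inv Ar) (rev p)).
    by rewrite -map_comp.
  by rewrite infix_map_inj //; apply: flip_inj.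
- rewrite -infix_revLR -map_rev revK.
  have -> : map (@Defs.inv Ar) p = map flipl (map (@dir Ar) p).
    by rewrite -map_comp.
  by rewrite infix_map_inj //; apply: flip_inj.
Qed.

Definition str x L := is_string s t rels (x, L).

Lemma str_inv x L : str x L ->
  str (wE x L) (rev (map flipl L)) /\ wE (wE x L) (rev (map flipl L)) = x.
Proof.
move=> [hv [hr hz]]; move: hv; rewrite valid_vp => /vp_rev [h1 h2].
split=> //; split; first by rewrite valid_vp.
split.
  by move: hr; rewrite /reduced /= sorted_rev_flip.
exact: nzr_inv hz _.
Qed.

Lemma str_sub x A B C : str x (A ++ B ++ C) -> str (wE x A) B.
Proof.
move=> [hv [hr hz]]; split.
  by move: hv; rewrite !valid_vp !vp_cat => /and3P[].
split.
  by move: hr; rewrite /reduced /=; exact: sorted_mid.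
move=> p /hz [h1 h2] /=; split.
  apply/negP => hh; move/negP: h1; apply; exact: infix_trans hh (infix_infix _ _ _).
apply/negP => hh; move/negP: h2; apply; exact: infix_trans hh (infix_infix _ _ _).
Qed.

Lemma wverts_split x M z : z \in wverts s t (x, M) ->
  exists A B, M = A ++ B /\ wE x A = z.
Proof.
elim: M x => [|l M IH] x /=.
  by rewrite inE => /eqP->; exists [::], [::].
rewrite inE => /orP[/eqP->|hz]; first by exists [::], (l :: M).
have [A [B [-> hA]]] := IH (LT l) hz.
by exists (l :: A), B.
Qed.

Lemma inW_of x M (a : V) : str x M -> a \in wverts s t (x, M) ->
  inW s t rels (trivial_walk Ar a) (x, M).
Proof.
move=> hs /wverts_split [A [B [eM hA]]]; subst M; split; first exact: hs.
by exists (x, A), (a, B).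
Qed.

Lemma Dobj_of x M (a z : V) : str x M -> a \in wverts s t (x, M) ->
  z \in wverts s t (x, M) -> D_obj s t rels (trivial_walk Ar a) z.
Proof. by move=> hs ha hz; exists (x, M); split=> //; apply: inW_of. Qed.

Lemma Darr_of x M (a : V) b : str x M -> a \in wverts s t (x, M) ->
  b \in map fst M -> D_arr s t rels (trivial_walk Ar a) b.
Proof. by move=> hs ha hb; exists (x, M); split=> //; apply: inW_of. Qed.

Lemma string_of_Dobj (a z : V) : D_obj s t rels (trivial_walk Ar a) z ->
  exists u, str a u /\ wE a u = z.
Proof.
move=> [[x M] [[hs [[x1 A] [[x2 B] [/= hA [hB heq]]]]] hz]].
change (wE x1 A = a) in hA.
rewrite /wcat /= in heq; case: heq => ex eM; subst x1 M.
have [A' [B' [hM hA']]] := wverts_split hz.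
have [le|lt] := leqP (size A) (size A').
  have [C [eA' eB]] := cat_cmp hM le; subst A' B.
  exists C; split; last by rewrite -hA' wE_cat hA.
  have hs' : str x (A ++ C ++ B') by [].
  by have := str_sub hs'; rewrite hA.
have [C [eA eB]] := cat_cmp (esym hM) (ltnW lt); subst A B'.
have hs' : str x (A' ++ C ++ B) by move: hs; rewrite /= -catA.
have := str_sub hs'; rewrite hA' => hC.
have [h1 h2] := str_inv hC.
have ea : wE z C = a by rewrite -hA' -wE_cat.
by exists (rev (map flipl C)); rewrite -ea.
Qed.



Definition Wl (d : letter) (L : seq letter) (i : nat) : letter := nth d L (i %% size L).
Definition win d L i k := map (Wl d L) (iota i k).

Lemma Wl_succ d L j : 0 < size L ->
  nth d (L ++ L) (j %% size L).+1 = Wl d L j.+1.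
Proof.
move=> hm; rewrite /Wl nth_cat.
have hc := ltn_pmod j hm.
have e : j.+1 %% size L = (j %% size L).+1 %% size L.
  by rewrite -addn1 -modnDml addn1.
rewrite e; case: ltnP => h.
  by rewrite (modn_small h).
have -> : (j %% size L).+1 = size L by apply/eqP; rewrite eqn_leq hc h.
by rewrite subnn modnn.
Qed.

Lemma band_props θ L d : is_band s t rels (θ, L) ->
  [/\ 0 < size L,
      (forall j, vrel (Wl d L j) (Wl d L j.+1) && rrel (Wl d L j) (Wl d L j.+1)),
      LS (nth d L 0) = θ & wE θ L = θ].
Proof.
move=> [[hv _] [hne [hcl [_ hpow]]]].
have hm : 0 < size L by case: L hne {hv hcl hpow}.
split=> //.
- move=> j; have [/andP [hv2 _] [hr2 _]] := hpow 2 isT.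
  move: hv2 hr2; rewrite /wpow /= cats0 /reduced /= => hv2 hr2.
  have hc := ltn_pmod j hm.
  have hi : (j %% size L).+1 < size (L ++ L) by rewrite size_cat; lia.
  move/(sortedP d): hv2 => /(_ _ hi); move/(sortedP d): hr2 => /(_ _ hi).
  rewrite Wl_succ // nth_cat hc => h1 h2.
  by rewrite /vrel /rrel -/(Wl d L j) h1 h2.
- by move: hv hm; case: L {hne hcl hpow} => //= l L /andP[_ /eqP].
Qed.

Section Window.
Variables (d : letter) (L : seq letter).
Hypothesis hm : 0 < size L.
Hypothesis hloc : forall j, vrel (Wl d L j) (Wl d L j.+1) && rrel (Wl d L j) (Wl d L j.+1).
Local Notation W := (Wl d L).
Local Notation m := (size L).

Lemma W_vrel j : LT (W j) = LS (W j.+1).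
Proof. by have /andP[/eqP h _] := hloc j. Qed.

Lemma win_vp i k : vp (LS (W i)) (win d L i k) /\ wE (LS (W i)) (win d L i k) = LS (W (i + k)).
Proof.
elim: k i => [|k IH] i; first by rewrite addn0.
rewrite /win /= -/(win d L i.+1 k) eqxx W_vrel.
have [h1 h2] := IH i.+1.
by rewrite h1 wE_cons W_vrel h2 addSnnS.
Qed.

Lemma win_sorted i k : sorted rrel (win d L i k).
Proof.
apply/(sortedP d) => j hj; rewrite size_map size_iota in hj.
rewrite /win !(nth_map 0) ?size_iota ?(ltnW hj) // !nth_iota ?(ltnW hj) //.
by have /andP[_ ] := hloc (i + j); rewrite addnS.
Qed.

Lemma win_add i k1 k2 : win d L i (k1 + k2) = win d L i k1 ++ win d L (i + k1) k2.
Proof. by rewrite /win iotaD map_cat. Qed.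

Lemma W_period q i : W (q * m + i) = W i.
Proof. by rewrite /Wl modnMDl. Qed.

Lemma win_full q : win d L (q * m) m = L.
Proof.
apply: (@eq_from_nth _ d); first by rewrite size_map size_iota.
move=> j; rewrite size_map size_iota => hj.
rewrite /win (nth_map 0) ?size_iota // nth_iota // W_period /Wl modn_small //.
Qed.

Lemma win_head i k : head d (win d L i k.+1) = W i.
Proof. by []. Qed.

Lemma win_last i k : last d (win d L i k.+1) = W (i + k).
Proof.
by rewrite /win -addn1 iotaD map_cat last_cat.
Qed.

Fixpoint raylen (i : nat) (v : seq letter) : nat :=
  if v is l :: v' then (if l == W i then (raylen i.+1 v').+1 else 0) else 0.

Lemma ray_dec i v : v = win d L i (raylen i v) ++ drop (raylen i v) v.
Proof.
elim: v i => [|l v IH] i //=.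
case: eqP => [->|_] //=.
by rewrite /win /= -/(win d L i.+1 _) -IH.
Qed.

Lemma ray_max i v l v'' : drop (raylen i v) v = l :: v'' -> l != W (i + raylen i v).
Proof.
elim: v i => [|l0 v IH] i //=.
case: eqP => [e|ne] /=.
  by move=> /IH; rewrite addSnnS.
by move=> [<- _]; rewrite addn0; apply/eqP.
Qed.

End Window.

Lemma vp_dir (c : Ar) r x : vp x (map (@dir Ar) (c :: r)) = (s c == x) && is_path s t (c :: r).
Proof.
elim: r c x => [|c' r IH] c x; first by rewrite /= andbT.
have := IH c' (t c); rewrite /lsrc /ltgt /= => ->.
by rewrite [t c == _]eq_sym.
Qed.

Lemma wE_dir (c : Ar) r x : wE x (map (@dir Ar) (c :: r)) = t (last c r).
Proof.
rewrite /wE -map_comp.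
have -> : map (LT \o (@dir Ar)) (c :: r) = map t (c :: r) by [].
by rewrite /= last_map.
Qed.

Lemma sorted_dir r : sorted rrel (map (@dir Ar) r).
Proof.
case: r => [|c r] //=; elim: r c => [|c' r IH] c //=.
by rewrite IH /rrel /= andbF.
Qed.

Lemma jn_eq (r : rel letter) (A B : seq letter) dflt : A != [::] -> B != [::] ->
  (if A is a :: A' then if B is b :: _ then r (last a A') b else true else true)
  = r (last dflt A) (head dflt B).
Proof. by case: A => [|a A] //; case: B. Qed.

Lemma rrel_neq l1 l2 : l2 != flipl l1 -> rrel l1 l2.
Proof.
case: l1 l2 => a1 b1 [a2 b2]; rewrite /rrel /flipl /= => h.
apply: contra h => /andP[/eqP-> hb].
by case: b1 b2 hb => [] [].
Qed.

Lemma rrel_flip_neq h w : h != w -> rrel (flipl h) w.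
Proof.
case: h w => a1 b1 [a2 b2]; rewrite /rrel /flipl /= => h.
apply: contra h => /andP[/eqP-> hb].
by case: b1 b2 hb => [] [].
Qed.

Lemma rrel_dir e l : l != (e, true) -> rrel (@dir Ar e) (flipl l).
Proof.
case: l => a b; rewrite /rrel /flipl /dir /= => h.
apply: contra h => /andP[/eqP-> hb].
by case: b hb.
Qed.

Lemma rrel_dir2 e l : e != l.1 -> rrel (@dir Ar e) l.
Proof. by move=> h; rewrite /rrel (negbTE h). Qed.

Lemma last_rev_flip dflt (v : seq letter) : v != [::] ->
  last dflt (rev (map flipl v)) = flipl (head dflt v).
Proof. by case: v => [|l v] //= _; rewrite rev_cons last_rcons. Qed.

Lemma head_rev_flip dflt (v : seq letter) : v != [::] ->
  head dflt (rev (map flipl v)) = flipl (last dflt v).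
Proof.
case/lastP: v => [|v l] // _.
by rewrite map_rcons rev_rcons last_rcons.
Qed.

Lemma red_sorted (x : V) L : reduced (x, L) = sorted rrel L.
Proof. by []. Qed.

Lemma core θ L d (r0 : Ar) (rr : seq Ar) (v U : seq letter) (a : V) (i1 : nat) :
  is_band s t rels (θ, L) ->
  in_I rels (r0 :: rr) -> is_path s t (r0 :: rr) ->
  vp a v -> wE a v = t (last r0 rr) -> sorted rrel v ->
  last (last r0 rr, false) v != (last r0 rr, true) ->
  last r0 rr \notin map fst L ->
  vp a U -> wE a U = s r0 -> sorted rrel (U ++ map (@dir Ar) (r0 :: rr)) ->
  LT (Wl d L i1) = a -> head (dir r0) U != flipl (Wl d L i1) ->
  has_DOZE s t rels.
Proof.
move=> hb hI hp hva hwv hsv hlv hnl hvU hwU hsU hi1 hh.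
have [hm hloc hθ hcl] := band_props d hb.
set m := size L in hm.
set i0 := i1.+1.
set K := raylen d L i0 v.
set v2 := drop K v.
have hdec : v = win d L i0 K ++ v2 := ray_dec d L i0 v.
set A := (i0 + K) * m.
have hA : i0 + K <= A by rewrite /A leq_pmulr.
set N := A - (i0 + K) + m + i0.
set Win := win d L (i0 + K) N.
set Z1 := win d L (i0 + K) (A - (i0 + K)).
set Z3 := win d L (A + m) i0.
set X := rev (map flipl v2).
set R := map (@dir Ar) (r0 :: rr).
have hWin : Win = Z1 ++ L ++ Z3.
  rewrite /Win /N win_add win_add -catA; congr (_ ++ _ ++ _).
    by rewrite (subnKC hA) /A win_full.
  by rewrite addnA (subnKC hA).
have ha : LS (Wl d L i0) = a by rewrite -(W_vrel hloc) hi1.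
set z := LS (Wl d L (i0 + K)).
have [hvw hww] := win_vp hloc i0 K.
have hww' : wE a (win d L i0 K) = z by rewrite -ha hww.
move: hva hwv hsv hlv; rewrite {1 2 3 4}hdec vp_cat wE_cat hww'.
move=> /andP[_ hv2] hwv2 hsv hlv.
have [hvX hwX] := vp_rev hv2.
have hD : R ++ (X ++ Z1) ++ L ++ (Z3 ++ U) ++ R = R ++ X ++ Win ++ U ++ R.
  by rewrite hWin -!catA.
have [hvW hwW] := win_vp hloc (i0 + K) N.
have eN : i0 + K + N = (i0 + K).+1 * m + i0.
  by rewrite /N !addnA (subnKC hA) /A mulSn [m + _]addnC.
have hWend : LS (Wl d L (i0 + K + N)) = a by rewrite eN W_period.
have hN : 0 < N by rewrite /N addn_gt0 addn_gt0 hm orbT.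
exists (s r0, R ++ (X ++ Z1) ++ L ++ (Z3 ++ U) ++ R).
exists (r0 :: rr), (r0 :: rr), (X ++ Z1), L, (Z3 ++ U).
split; first by [].
split.
  have hR : vp (s r0) R by rewrite /R vp_dir eqxx hp.
  have e1 : wE (s r0) R = wE z v2 by rewrite /R wE_dir hwv2.
  rewrite valid_vp hD vp_cat hR e1 vp_cat hvX hwX vp_cat hvW hwW hWend.
  by rewrite vp_cat hvU hwU hR.
split.
  rewrite red_sorted hD.
  have hUR : sorted rrel (Win ++ U ++ R).
    rewrite sorted_catJ (win_sorted hloc) hsU (jn_eq _ d) //; last first.
      by case: (U).
      by rewrite /Win; case: (N) hN.
    apply: rrel_neq.
    have -> : last d Win = Wl d L i1.
      rewrite /Win; case: (N) hN eN => [|N'] // _ eN'.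
      rewrite win_last.
      have : i0 + K + N' = (i0 + K).+1 * m + i1.
        by move: eN'; rewrite addnS [_ + i0]addnS => -[].
      by move=> ->; rewrite W_period.
    by case: (U) hh.
  have hXW : sorted rrel (X ++ Win ++ U ++ R).
    case hv2e : v2 => [|l v2']; first by rewrite /X hv2e.
    rewrite sorted_catJ hUR /X sorted_rev_flip.
    have hsv2' : sorted rrel v2.
      by move: (hsv); rewrite sorted_catJ => /and3P[].
    rewrite hsv2' (jn_eq _ d) //; last by rewrite /Win; case: (N) hN.
      rewrite last_rev_flip; last by rewrite hv2e.
      have -> : head d (Win ++ U ++ R) = Wl d L (i0 + K).
        by rewrite /Win; case: (N) hN.
      apply: rrel_flip_neq.
      have := ray_max (d := d) (L := L) (i := i0) (v := v) (l := l) (v'' := v2').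
      by rewrite -/K -/v2 hv2e addnC => /(_ erefl); rewrite addnC.
    by rewrite /X hv2e /= rev_cons; case: (rev _).
  have hRne : R != [::] by [].
  have hBne : X ++ Win ++ U ++ R != [::] by rewrite -size_eq0 !size_cat /R /= !addnS.
  rewrite sorted_catJ (jn_eq _ d hRne hBne) sorted_dir hXW /=.
  rewrite /R /= last_map.
  case hv2e : v2 => [|l v2'].
    have -> : head d (X ++ Win ++ U ++ R) = Wl d L (i0 + K).
      by rewrite /X hv2e /Win; case: (N) hN.
    apply: rrel_dir2; apply: contra hnl => /eqP->.
    by apply: map_f; rewrite /Wl mem_nth // ltn_pmod.
  have hXne : X != [::] by rewrite /X hv2e rev_cons; case: (rev _).
  have -> : head d (X ++ Win ++ U ++ R) = head d X by case: (X) hXne.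
  rewrite /X head_rev_flip; last by rewrite hv2e.
  apply: rrel_dir.
  by rewrite hv2e /=; move: hlv; rewrite last_cat hv2e.
split; first by [].
split; first by [].
have -> : wend s t (s r0, R ++ X ++ Z1) = θ.
  rewrite wend_wE !wE_cat /R wE_dir -hwv2 hwX -/z.
  have [_ ->] := win_vp hloc (i0 + K) (A - (i0 + K)).
  rewrite (subnKC hA) /A -[(i0 + K) * m]addn0 W_period /Wl mod0n hθ.
  by [].
by [].
Qed.

Lemma nseq_flat_comm n (Y : seq letter) : flatten (nseq n Y) ++ Y = Y ++ flatten (nseq n Y).
Proof. elim: n => [|n IH] /=; first by rewrite cats0. by rewrite -catA IH. Qed.

Lemma rev_flat n (X : seq letter) : rev (flatten (nseq n X)) = flatten (nseq n (rev X)).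
Proof. elim: n => [|n IH] //=. by rewrite rev_cat IH nseq_flat_comm. Qed.

Lemma map_flat n X : map flipl (flatten (nseq n X)) = flatten (nseq n (map flipl X)).
Proof. by rewrite map_flatten map_nseq. Qed.

Lemma wE_pow θ L n : wE θ L = θ -> wE θ (flatten (nseq n L)) = θ.
Proof. move=> h; elim: n => [|n IH] //=. by rewrite wE_cat h IH. Qed.

Lemma revflipK L : rev (map flipl (rev (map flipl L))) = L.
Proof. by rewrite map_rev revK -map_comp (eq_map flipK) map_id. Qed.

Lemma band_inv θ L : is_band s t rels (θ, L) -> is_band s t rels (θ, rev (map flipl L)).
Proof.
move=> hb; have [hs [hne [hcl [hprim hpow]]]] := hb.
have hcl' : wE θ L = θ := hcl.
have [h1 h2] := str_inv hs; rewrite hcl' in h1 h2.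
split; first exact: h1.
split; first by rewrite /= -size_eq0 size_rev size_map size_eq0.
split; first exact: h2.
split.
  move=> [u [k [hk e]]]; apply: hprim; exists (θ, rev (map flipl u.2)), k; split=> //.
  case: e => e1 e2.
  have e3 : flatten (nseq k (rev (map flipl u.2))) = L.
    by rewrite -[L]revflipK e2 map_flat rev_flat.
  by rewrite /wpow /= e3.
move=> n hn; have := hpow n hn; rewrite /wpow /= => hsn.
have [h3 _] := str_inv hsn; rewrite wE_pow // in h3.
by rewrite map_flat rev_flat in h3.
Qed.

Lemma LS_mem x L l : vp x L -> l \in L -> LS l \in wverts s t (x, L).
Proof.
elim: L x => [|l0 L IH] x //= /andP[/eqP h hv]; rewrite inE => /orP[/eqP->|hl].
  by rewrite h mem_head.
by have := IH _ hv hl; rewrite /= !inE => ->; rewrite !orbT.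
Qed.

Lemma LT_mem x L l : l \in L -> LT l \in wverts s t (x, L).
Proof. by move=> hl; rewrite /= inE (map_f LT hl) orbT. Qed.

Lemma exists_pos θ L d a : vp θ L -> wE θ L = θ -> 0 < size L ->
  a \in wverts s t (θ, L) -> exists i1, LT (Wl d L i1) = a.
Proof.
move=> hv hcl hm; rewrite /= inE => /orP[/eqP->|].
  exists (size L).-1; rewrite /Wl modn_small ?prednK // nth_last.
  rewrite -hcl /wE; case: L hm {hv hcl} => [|l L] //= _.
  by rewrite last_map.
move=> /(nthP (LT d)) [k]; rewrite size_map => hk <-.
by exists k; rewrite /Wl (modn_small hk) (nth_map d).
Qed.

Lemma rrel_self_flip l : ~~ rrel l (flipl l).
Proof. by case: l => a b; rewrite /rrel /flipl /= eqxx; case: b. Qed.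

Lemma rrel_dir_r l c : l != ((c, false) : letter) -> rrel l (@dir Ar c).
Proof.
case: l => a b; rewrite /rrel /dir /= => h; apply: contra h => /andP[/eqP-> hb].
by case: b hb.
Qed.

Lemma not_infix_dirs (X Y : seq letter) : X != [::] -> all (fun l => ~~ l.2) X ->
  all (fun l => l.2) Y -> ~~ infix X Y.
Proof.
case: X => [|x X] // _ /andP[hx _] hY; apply/negP => /mem_infix /(_ x (mem_head _ _)).
by move/(allP hY); rewrite (negbTE hx).
Qed.

Lemma infix_map_fwd (T1 T2 : eqType) (f : T1 -> T2) X Y : infix X Y -> infix (map f X) (map f Y).
Proof. by case/infixP=> A [B ->]; rewrite !map_cat; apply: infix_infix. Qed.


Lemma ar1 m c : 0 < m -> m - 1 - c < m.
Proof. lia. Qed.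
Lemma ar2 m c : c < m -> m - (m - 1 - c).+1 = c.
Proof. lia. Qed.

Lemma in_I_infix X Y : infix X Y -> in_I rels X -> in_I rels Y.
Proof. by move=> h /hasP [r hr hrX]; apply/hasP; exists r => //; exact: infix_trans hrX h. Qed.

Lemma a_in (x : V) M : x \in wverts s t (x, M).
Proof. by rewrite /= inE eqxx. Qed.

Lemma fst_dir r : map fst (map (@dir Ar) r) = r.
Proof. by elim: r => //= x r ->. Qed.

Lemma dir_inj : injective (@dir Ar).
Proof. by move=> x y [->]. Qed.

Definition Pq (a : V) (q : seq Ar) (c : Ar) : Prop :=
  is_path s t (c :: q) -> ~~ in_I rels (c :: q) ->
  D_obj s t rels (trivial_walk Ar a) (s c) ->
  D_obj s t rels (trivial_walk Ar a) (t (last c q)) ->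
  forall b, b \in c :: q -> D_arr s t rels (trivial_walk Ar a) b.

Lemma rec_init a q c : (forall q' c', size q' < size q -> Pq a q' c') ->
  is_path s t (c :: q) -> ~~ in_I rels (c :: q) ->
  D_obj s t rels (trivial_walk Ar a) (s c) ->
  D_arr s t rels (trivial_walk Ar a) (last c q) ->
  D_obj s t rels (trivial_walk Ar a) (s (last c q)) ->
  forall b, b \in c :: q -> D_arr s t rels (trivial_walk Ar a) b.
Proof.
case/lastP: q => [|q1 e] IH hp hnI hx he hse b.
  by rewrite mem_seq1 => /eqP->.
rewrite last_rcons in he hse.
rewrite -cats1 -cat_cons mem_cat mem_seq1 => /orP[hb|/eqP->//].
move: hp; rewrite /is_path -cats1 -cat_cons sorted_catJ => /and3P[hp1 _ /= /eqP hj].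
apply: (IH q1 c) => //.
- by rewrite size_rcons.
- apply: contra hnI => h; apply: (in_I_infix _ h).
  by rewrite -cats1 -cat_cons prefix_infix.
- by rewrite hj.
Qed.

Lemma rec_tail a q c : (forall q' c', size q' < size q -> Pq a q' c') ->
  is_path s t (c :: q) -> ~~ in_I rels (c :: q) ->
  D_obj s t rels (trivial_walk Ar a) (t (last c q)) ->
  D_arr s t rels (trivial_walk Ar a) c ->
  D_obj s t rels (trivial_walk Ar a) (t c) ->
  forall b, b \in c :: q -> D_arr s t rels (trivial_walk Ar a) b.
Proof.
case: q => [|c' q] IH hp hnI hy hc htc b.
  by rewrite mem_seq1 => /eqP->.
rewrite inE => /orP[/eqP->//|hb].
move: hp; rewrite /is_path /= => /andP[/eqP hj hp'].
apply: (IH q c') => //.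
- apply: contra hnI => h; apply: (in_I_infix _ h).
  by rewrite -[c :: c' :: q]cat1s suffix_infix.
- by rewrite -hj.
Qed.

Lemma all_inv Y : all (fun l : letter => ~~ l.2) (map (@Defs.inv Ar) Y).
Proof. by apply/allP => l /mapP[x _ ->]. Qed.
Lemma all_dir Y : all (fun l : letter => l.2) (map (@dir Ar) Y).
Proof. by apply/allP => l /mapP[x _ ->]. Qed.

Lemma step θ L (a : V) q c :
  string_algebra s t rels -> ~ has_DOZE s t rels -> is_band s t rels (θ, L) ->
  a \in wverts s t (θ, L) ->
  (forall q' c', size q' < size q -> Pq a q' c') -> Pq a q c.
Proof.
move=> hSA hnd hb ha IH hp hnI hx hy.
have d : letter := (c, true).
have [hm hloc hθ hcl] := band_props d hb.
have [hbs _] := hb.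
have hvθ : vp θ L by move: hbs => [+ _]; rewrite valid_vp.
have [u [hu hwu]] := string_of_Dobj hx.
have [v [hv hwv]] := string_of_Dobj hy.
have hvu : vp a u by move: hu => [+ _]; rewrite valid_vp.
have hvv : vp a v by move: hv => [+ _]; rewrite valid_vp.
have hsu : sorted rrel u by move: hu => [_ []].
have hsv : sorted rrel v by move: hv => [_ []].
case hA : (last (last c q, false) v == (last c q, true)).
  have hin : (last c q, true) \in v.
    by have := mem_last (last c q, false) v; rewrite (eqP hA) inE => /orP[/eqP|].
  apply: rec_init => //.
    by apply: (Darr_of hv (a_in _ _)); exact: (map_f fst hin).
  exact: (Dobj_of hv (a_in _ _) (LS_mem hvv hin)).
case hB : (last c q \in map fst L).
  apply: rec_init => //; first exact: Darr_of hbs ha hB.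
  move/mapP: hB => [[x bb] hl /= ->].
  case: bb hl => hl.
    exact: (Dobj_of hbs ha (LS_mem hvθ hl)).
  exact: (Dobj_of hbs ha (LT_mem θ hl)).
case hC : (last (c, true) u == (c, false)).
  have hin : (c, false) \in u.
    by have := mem_last (c, true) u; rewrite (eqP hC) inE => /orP[/eqP|].
  apply: rec_tail => //.
    by apply: (Darr_of hu (a_in _ _)); exact: (map_f fst hin).
  exact: (Dobj_of hu (a_in _ _) (LS_mem hvu hin)).
have hvW : vp a (u ++ map (@dir Ar) (c :: q)) by rewrite vp_cat hvu hwu vp_dir eqxx hp.
have hrW : sorted rrel (u ++ map (@dir Ar) (c :: q)).
  rewrite sorted_catJ sorted_dir hsu /=.
  case hu0 : u => [|l u'] //; rewrite hu0 /= in hC.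
  by apply: rrel_dir_r; rewrite hC.
have [hs|hns] := classic (str a (u ++ map (@dir Ar) (c :: q))).
  move=> b hbb; apply: (Darr_of hs (a_in _ _)).
  by rewrite map_cat mem_cat fst_dir hbb orbT.
exfalso; apply: hnd.
have hnz : ~ no_zero_relation rels (a, u ++ map (@dir Ar) (c :: q)).
  move=> h; apply: hns; split; first by rewrite valid_vp.
  by split.
have [p [hpI hpinf]] : exists p, in_I rels p /\
   (infix (map (@dir Ar) p) (u ++ map (@dir Ar) (c :: q)) \/
    infix (map (@Defs.inv Ar) (rev p)) (u ++ map (@dir Ar) (c :: q))).
  apply: NNPP => hne; apply: hnz => p hpp.
  split; apply/negP => hi; apply: hne; exists p; split => //; [left|right] => //.
move/hasP: hpI => [r0 hr0 hr0p].
have hsz : 1 < size r0 by have [h _] := hSA; have [_ ] := h r0 hr0.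
have hIr0 : in_I rels r0 by apply/hasP; exists r0 => //; exact: infix_refl.
have [_ [_ hnzu]] := hu.
have [hnzu1 hnzu2] := hnzu r0 hIr0.
case: hpinf => hpinf.
  have := infix_trans (infix_map_fwd (@dir Ar) hr0p) hpinf.
  move=> /infix_cat_split [h|[h|[X1 [X2 [A1 [B2 [e1 [hX1 [hX2 [eu eq']]]]]]]]]].
  - by rewrite h in hnzu1.
  - have h' : infix r0 (c :: q) by rewrite -(infix_map_inj dir_inj).
    by rewrite (in_I_infix h' hIr0) in hnI.
  - set P0 := take (size X1) r0.
    have eX1 : X1 = map (@dir Ar) P0 by rewrite /P0 map_take e1 take_size_cat.
    have hIP : in_I rels (P0 ++ c :: q).
      apply: (in_I_infix _ hIr0); rewrite -(infix_map_inj dir_inj) map_cat -eX1 eq' e1 catA.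
      exact: prefix_infix.
    case hP0 : P0 eX1 hIP => [|p0 P0'] eX1 hIP.
      by move: hX1; rewrite eX1.
    have eW : u ++ map (@dir Ar) (c :: q) = A1 ++ map (@dir Ar) (p0 :: P0' ++ c :: q).
      by rewrite eu eX1 -catA -map_cat.
    have hvA1 : vp a A1 by move: hvu; rewrite eu vp_cat => /andP[].
    move: (hvW); rewrite eW vp_cat => /andP[_]; rewrite vp_dir => /andP[/eqP hwA hpP].
    have hlast : last p0 (P0' ++ c :: q) = last c q by rewrite last_cat.
    have [i1 hi1] := exists_pos d hvθ hcl hm ha.
    have hhd : head (dir p0) A1 = head (dir p0) u by rewrite eu eX1; case: (A1).
    have hcore := @core _ _ d p0 (P0' ++ c :: q) v A1 a.
    case hh : (head (dir p0) A1 == flipl (Wl d L i1)).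
      set L' := rev (map flipl L).
      have hb' := band_inv hb.
      set m := size L.
      set c1 := i1.+1 %% m.
      have hc1 : c1 < m by rewrite ltn_pmod.
      set i1' := m - 1 - c1.
      have hi1' : i1' < m by apply: ar1.
      have eW' : Wl d L' i1' = flipl (Wl d L i1.+1).
        rewrite /Wl /L' size_rev size_map -/m (modn_small hi1') nth_rev ?size_map //.
        rewrite -/m (nth_map d); last by rewrite /i1' ar2.
        by rewrite /i1' ar2.
      apply: (hcore θ L' i1' hb') => //.
      + by rewrite hlast.
      + by rewrite hlast hA.
      + by rewrite hlast /L' map_rev mem_rev -map_comp hB.
      + by rewrite -eW.
      + by rewrite eW' LT_flip -(W_vrel hloc).
      + rewrite eW' flipK (eqP hh); apply/negP => /eqP he.
        by have := hloc i1; rewrite -he (negbTE (rrel_self_flip _)) andbF.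
    apply: (hcore θ L i1 hb) => //.
    + by rewrite hlast.
    + by rewrite hlast hA.
    + by rewrite hlast hB.
    + by rewrite -eW.
    + by rewrite hh.
  have hrr : infix (rev r0) (rev p) by rewrite infix_rev.
  have := infix_trans (infix_map_fwd (@Defs.inv Ar) hrr) hpinf.
  have hXn : map (@Defs.inv Ar) (rev r0) != [::].
    by rewrite -size_eq0 size_map size_rev; case: (r0) hsz.
  move=> /infix_cat_split [h|[h|[X1 [X2 [A1 [B2 [e1 [hX1 [hX2 [eu eq']]]]]]]]]].
  - by rewrite h in hnzu2.
  - have : ~~ infix (map (@Defs.inv Ar) (rev r0)) (map (@dir Ar) (c :: q)).
      by apply: not_infix_dirs => //; [exact: all_inv | exact: all_dir].
    by rewrite h.
  - have : ~~ infix X2 (map (@dir Ar) (c :: q)).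
      apply: not_infix_dirs => //; last exact: all_dir.
      by have := all_inv (rev r0); rewrite e1 all_cat => /andP[].
    by rewrite eq' prefix_infix.
Qed.

Lemma main_all θ L (a : V) : string_algebra s t rels -> ~ has_DOZE s t rels ->
  is_band s t rels (θ, L) -> a \in wverts s t (θ, L) ->
  forall n q c, size q <= n -> Pq a q c.
Proof.
move=> hSA hnd hb ha; elim=> [|n IH] q c hq; apply: (step hSA hnd hb ha) => q' c' hq'.
  by rewrite leqn0 in hq; rewrite (eqP hq) in hq'.
by apply: IH; rewrite -ltnS (leq_trans hq' hq).
Qed.

End Walks.

Theorem lemma2p3 (V Ar : finType) (s t : Ar -> V) (rels : seq (seq Ar)) :
  standing_assumptions s t rels ->
  forall (Theta : walk V Ar) (a : V),
    is_band s t rels Theta ->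
    (forall b : Ar, ~ entering s t Theta b) ->
    a \in wverts s t Theta ->
    (forall b : Ar, s b = a -> b \in warrows Theta) ->
    (* every arrow between objects of D(eps_a) is in D(eps_a) *)
    (forall b : Ar,
        D_obj s t rels (trivial_walk Ar a) (s b) ->
        D_obj s t rels (trivial_walk Ar a) (t b) ->
        D_arr s t rels (trivial_walk Ar a) b) /\
    (* every nonzero path (morphism of R) between objects of D(eps_a)
       lies in D(eps_a) *)
    (forall (b0 : Ar) (p : seq Ar),
        is_path s t (b0 :: p) -> ~~ in_I rels (b0 :: p) ->
        D_obj s t rels (trivial_walk Ar a) (s b0) ->
        D_obj s t rels (trivial_walk Ar a) (t (last b0 p)) ->
        forall b, b \in b0 :: p -> D_arr s t rels (trivial_walk Ar a) b).
Proof.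
move=> [hSA [hnd _]] [θ L] a hb _ ha _.
have hm := main_all hSA hnd hb ha.
split.
  move=> b hx hy; apply: (hm 0 [::] b (leqnn 0) _ _ hx hy b (mem_head _ _)) => //.
  apply/hasP => -[r hr].
  have [h _] := hSA; have [_ hsz] := h r hr.
  move/size_infix => /= h1.
  by have := leq_trans hsz h1.
move=> b0 p hp hnI hx hy.
exact: (hm (size p) p b0 (leqnn _) hp hnI hx hy).
Qed.
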